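(* Let $X$ be a real Hilbert space, $f:X\to\mathbb{R}\cup\{+\infty\}$ a proper $\Phi_{lsc}$-convex function and $\bar x\in\mathrm{dom}(f)$. If $(a,v)\in\partial^{loc}_{lsc}f(\bar x)$, then there exists $\bar a\ge 0$ such that $(\bar a,\ v-2a\bar x+2\bar a\bar x)\in\partial_{lsc}f(\bar x)$.
   Context: $\Phi_{lsc}$ is the class of functions $\varphi(x)=-a\|x\|^2+\langle v,x\rangle+c$ ($a\ge0$, $v\in X^*$, $c\in\mathbb{R}$); $\mathrm{supp}(f)=\{\varphi\in\Phi_{lsc}:\varphi\le f\}$; $f$ is $\Phi_{lsc}$-convex if $f=\sup\mathrm{supp}(f)$ pointwise; proper means $\mathrm{supp}(f)\ne\emptyset$ and $\mathrm{dom}(f)\ne\emptyset$. For $\varepsilon\ge0$ and $\bar x\in\mathrm{dom}(f)$, a pair $(a,v)\in\mathbb{R}_+\times X^*$ is an $\varepsilon$-$\Phi_{lsc}$-subgradient of $f$ at $\bar x$ if $f(x)-f(\bar x)\ge\langle v,x-\bar x\rangle-a\|x\|^2+a\|\bar x\|^2-\varepsilon$ for all $x\in X$; the set of these is $\partial^\varepsilon_{lsc}f(\bar x)$, and $\partial_{lsc}f(\bar x):=\partial^0_{lsc}f(\bar x)$. A pair $(a,v)\in\mathbb{R}_+\times X^*$ is a local $\Phi_{lsc}$-subgradient of $f$ at $\bar x$ if there is $\delta>0$ such that $f(x)-f(\bar x)\ge\langle v,x-\bar x\rangle-a\|x\|^2+a\|\bar x\|^2$ for all $x$ with $\|x-\bar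 x\|<\delta$; the set of these is $\partial^{loc}_{lsc}f(\bar x)$. *)

(* Defs.v *)
From Stdlib Require Import Reals.
Open Scope R_scope.

Class RealHilbert (X : Type) := {
  vzero : X;
  vadd : X -> X -> X;
  vopp : X -> X;
  vscal : R -> X -> X;
  inner : X -> X -> R;
  vadd_assoc : forall x y z, vadd x (vadd y z) = vadd (vadd x y) z;
  vadd_comm : forall x y, vadd x y = vadd y x;
  vadd_0 : forall x, vadd x vzero = x;
  vadd_opp : forall x, vadd x (vopp x) = vzero;
  vscal_1 : forall x, vscal 1 x = x;
  vscal_assoc : forall a b x, vscal a (vscal b x) = vscal (a * b) x;
  vscal_distr_v : forall a x y, vscal a (vadd x y) = vadd (vscal a x) (vscal a y);
  vscal_distr_s : forall a b x, vscal (a + b) x = vadd (vscal a x) (vscal b x);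
  inner_sym : forall x y, inner x y = inner y x;
  inner_add_l : forall x y z, inner (vadd x y) z = inner x z + inner y z;
  inner_scal_l : forall a x y, inner (vscal a x) y = a * inner x y;
  inner_pos : forall x, 0 <= inner x x;
  inner_def : forall x, inner x x = 0 -> x = vzero;
  complete : forall u : nat -> X,
    (forall eps, eps > 0 -> exists N, forall m n, (m >= N)%nat -> (n >= N)%nat ->
        sqrt (inner (vadd (u m) (vopp (u n))) (vadd (u m) (vopp (u n)))) < eps) ->
    exists l, forall eps, eps > 0 -> exists N, forall n, (n >= N)%nat ->
        sqrt (inner (vadd (u n) (vopp l)) (vadd (u n) (vopp l))) < eps
}.

Section Defs.
Context {X : Type} `{RealHilbert X}.

Definition vsub (x y : X) : X := vadd x (vopp y).
Definition sqnorm (x : X) : R := inner x x.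

Inductive ERbar := Fin (r : R) | PInf.

Definition le_ER (r : R) (e : ERbar) : Prop :=
  match e with Fin y => r <= y | PInf => True end.
Definition lt_ER (r : R) (e : ERbar) : Prop :=
  match e with Fin y => r < y | PInf => True end.

(** phi(x) = -a||x||^2 + <v,x> + c, with a >= 0 (X^* identified with X by Riesz) *)
Definition phi_lsc (a : R) (v : X) (c : R) (x : X) : R :=
  - a * sqnorm x + inner v x + c.

Definition in_supp (f : X -> ERbar) (a : R) (v : X) (c : R) : Prop :=
  0 <= a /\ forall x, le_ER (phi_lsc a v c x) (f x).

Definition dom (f : X -> ERbar) (x : X) : Prop := exists r, f x = Fin r.

(** f = sup supp(f) pointwise (sup taken in the extended reals) *)
Definition Phi_lsc_convex (f : X -> ERbar) : Prop :=
  forall x r, lt_ER r (f x) ->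
    exists a v c, in_supp f a v c /\ r < phi_lsc a v c x.

Definition proper (f : X -> ERbar) : Prop :=
  (exists a v c, in_supp f a v c) /\ (exists x, dom f x).

Definition eps_subgrad (eps : R) (f : X -> ERbar) (xb : X) (a : R) (v : X) : Prop :=
  0 <= a /\
  exists fxb, f xb = Fin fxb /\
  forall x, match f x with
            | Fin fx => fx - fxb >= inner v (vsub x xb) - a * sqnorm x + a * sqnorm xb - eps
            | PInf => True
            end.

Definition subgrad (f : X -> ERbar) (xb : X) (a : R) (v : X) : Prop :=
  eps_subgrad 0 f xb a v.

Definition loc_subgrad (f : X -> ERbar) (xb : X) (a : R) (v : X) : Prop :=
  0 <= a /\
  exists fxb, f xb = Fin fxb /\
  exists delta, delta > 0 /\
  forall x, sqrt (sqnorm (vsub x xb)) < delta ->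
     match f x with
     | Fin fx => fx - fxb >= inner v (vsub x xb) - a * sqnorm x + a * sqnorm xb
     | PInf => True
     end.

End Defs.

(* Main.v *)
Require Import Defs.
From Stdlib Require Import Reals Lra Psatz.
Open Scope R_scope.

Section Aux.
Context {X : Type} `{RealHilbert X}.

Lemma inner_zero_l z : inner vzero z = 0.
Proof.
  assert (E : inner (vadd vzero vzero) z = inner vzero z + inner vzero z) by apply inner_add_l.
  rewrite vadd_0 in E. lra.
Qed.

Lemma inner_opp_l y z : inner (vopp y) z = - inner y z.
Proof.
  assert (E : inner (vadd y (vopp y)) z = inner y z + inner (vopp y) z) by apply inner_add_l.
  rewrite vadd_opp, inner_zero_l in E. lra.
Qed.

Lemma inner_add_r x y z : inner z (vadd x y) = inner z x + inner z y.
Proof. rewrite inner_sym, inner_add_l, (inner_sym x), (inner_sym y). reflexivity. Qed.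

Lemma inner_opp_r y z : inner z (vopp y) = - inner z y.
Proof. rewrite inner_sym, inner_opp_l, inner_sym. reflexivity. Qed.

Lemma inner_scal_r a y z : inner z (vscal a y) = a * inner z y.
Proof. rewrite inner_sym, inner_scal_l, inner_sym. reflexivity. Qed.
End Aux.

Ltac expand := unfold phi_lsc in *; unfold vsub, sqnorm in *;
  repeat rewrite ?inner_add_l, ?inner_add_r, ?inner_opp_l, ?inner_opp_r,
    ?inner_scal_l, ?inner_scal_r in *.

Theorem mainTheorem3 (X : Type) (HX : RealHilbert X) (f : X -> ERbar) (xb : X)
  (a : R) (v : X) :
  proper f -> Phi_lsc_convex f -> dom f xb ->
  loc_subgrad f xb a v ->
  exists ab, ab >= 0 /\
    subgrad f xb ab (vadd (vsub v (vscal (2 * a) xb)) (vscal (2 * ab) xb)).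
Proof.
  intros [[a0 [v0 [c0 [Ha0 Hsupp]]]] _] _ _ [Ha [fxb [Hfxb [d [Hd Hloc]]]]].
  set (w := vsub v (vscal (2 * a) xb)).
  set (u := vsub (vsub v0 (vscal (2 * a0) xb)) w).
  set (K := - a0 * sqnorm xb + inner v0 xb + c0 - fxb).
  set (M := sqnorm u / 2 - K).
  set (ab := Rmax a (a0 + 1/2 + Rabs M / (d * d))).
  assert (Hab1 : a <= ab) by apply Rmax_l.
  assert (Hab2 : a0 + 1/2 + Rabs M / (d * d) <= ab) by apply Rmax_r.
  exists ab. split; [lra|]. split; [lra|]. exists fxb. split; [exact Hfxb|].
  intro x. specialize (Hloc x). specialize (Hsupp x).
  destruct (f x) as [fx|] eqn:Efx; [|exact I].
  unfold le_ER in Hsupp.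
  assert (Hhh : 0 <= sqnorm (vsub x xb)) by apply inner_pos.
  destruct (Rlt_dec (sqrt (sqnorm (vsub x xb))) d) as [Hlt|Hge].
  - specialize (Hloc Hlt).
    assert (P : 0 <= (ab - a) * sqnorm (vsub x xb)) by (apply Rmult_le_pos; lra).
    clear Hsupp Hlt Efx Hab2. subst w u K M ab.
    expand.
    try rewrite (inner_sym x xb) in *; try rewrite (inner_sym x v) in *;
    try rewrite (inner_sym xb v) in *. nra.
  - assert (Hs : d * d <= sqnorm (vsub x xb)).
    { apply Rnot_lt_le in Hge. rewrite <- (sqrt_sqrt _ Hhh). nra. }
    assert (Hq : Rabs M <= (ab - a0 - 1/2) * sqnorm (vsub x xb)).
    { assert (Rabs M / (d*d) * (d*d) <= (ab - a0 - 1/2) * sqnorm (vsub x xb)).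
      { apply Rmult_le_compat; try nra.
        apply Rmult_le_pos; [apply Rabs_pos|]. left; apply Rinv_0_lt_compat; nra. }
      unfold Rdiv in H. rewrite Rmult_assoc, Rinv_l, Rmult_1_r in H; [lra|]. apply Rgt_not_eq; nra. }
    assert (HM : M <= Rabs M) by apply Rle_abs.
    assert (Huh : 0 <= sqnorm (vadd u (vsub x xb))) by apply inner_pos.
    clear Hloc Hge Efx Hab1 Hab2 Hs.
    unfold M, K in HM.
    subst w u K M. clearbody ab.
    expand.
    try rewrite (inner_sym x xb) in *; try rewrite (inner_sym x v) in *;
    try rewrite (inner_sym xb v) in *; try rewrite (inner_sym x v0) in *;
    try rewrite (inner_sym xb v0) in *; try rewrite (inner_sym v v0) in *.
    lra.
Qed.
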